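(* Let $G=(V,E)$ be a graph, $\prec$ a strict partial order on $P_f(\mathbb{N}^+)$, and $\sigma$ an ordering of $V$. Then there exists an ordering $\tau$ of $V$ with $\sigma=\mathrm{TBLS}(G,\prec,\tau)$ if and only if $\sigma=\mathrm{TBLS}(G,\prec,\sigma)$.
   Context: Let $G=(V,E)$ be a finite undirected graph with $n$ vertices. An ordering of $V$ is a bijection $\sigma:\{1,\dots,n\}\to V$; $\sigma(i)$ is the $i$th vertex. $P_f(\mathbb{N}^+)$ is the set of finite subsets of the positive integers. Given a strict partial order $\prec$ on $P_f(\mathbb{N}^+)$ and an ordering $\tau$ of $V$, the Tie-Breaking Label Search $\mathrm{TBLS}(G,\prec,\tau)$ is the procedure: set $label(v)=\emptyset$ for every $v$; for $i=1,\dots,n$: let Eligible be the set of unnumbered vertices $x$ such that there is no unnumbered vertex $y$ with $label(x)\prec label(y)$; let $v$ be the first vertex of Eligible in the ordering $\tau$; set $\sigma(i)=v$ ($v$ becomes numbered); for every unnumbered neighbour $w$ of $v$ replace $label(w)$ by $label(w)\cup\{i\}$. The output is $\sigma$. *)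

(* Defs.v *)
From HB Require Import structures.
From mathcomp Require Import all_boot all_order.
From mathcomp Require Import finmap.
Set Implicit Arguments. Unset Strict Implicit. Unset Printing Implicit Defensive.
Local Open Scope fset_scope.

Definition undirected_graph (V : finType) (e : rel V) : Prop :=
  symmetric e /\ irreflexive e.

Definition strict_porder (prec : rel {fset nat}) : Prop :=
  irreflexive prec /\ transitive prec.

Definition ordering (V : finType) (s : seq V) : Prop :=
  uniq s /\ size s = #|V|.

(* Label of vertex x after the vertices of the prefix p have been numbered
   1, ..., size p (p`_i gets number i+1): the set of numbers of the numbered
   neighbours of x. *)
Definition label (V : finType) (e : rel V) (p : seq V) (x : V) : {fset nat} :=
  [fset i.+1 | i in [seq i <- iota 0 (size p) | e (nth x p i) x]].

Definition eligible (V : finType) (e : rel V) (prec : rel {fset nat})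
    (p : seq V) (x : V) : bool :=
  (x \notin p) &&
  [forall y : V, (y \notin p) ==> ~~ prec (label e p x) (label e p y)].

Definition tbls_next (V : finType) (e : rel V) (prec : rel {fset nat})
    (tau : seq V) (p : seq V) : option V :=
  ohead [seq x <- tau | eligible e prec p x].

Fixpoint tbls_aux (V : finType) (e : rel V) (prec : rel {fset nat})
    (tau : seq V) (k : nat) (p : seq V) : seq V :=
  match k with
  | 0 => p
  | k.+1 =>
    match tbls_next e prec tau p with
    | Some v => tbls_aux e prec tau k (rcons p v)
    | None => p
    end
  end.

Definition TBLS (V : finType) (e : rel V) (prec : rel {fset nat})
    (tau : seq V) : seq V :=
  tbls_aux e prec tau #|V| [::].

(* Main.v *)
Require Import Defs.
From mathcomp Require Import all_boot all_order.
From mathcomp Require Import finmap.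

Lemma aux_prefix (V : finType) (e : rel V) prec (tau : seq V) k :
  forall p, exists r, tbls_aux e prec tau k p = p ++ r.
Proof.
elim: k => [|k IH] p /=; first by exists [::]; rewrite cats0.
case: (tbls_next e prec tau p) => [v|]; last by exists [::]; rewrite cats0.
have [r ->] := IH (rcons p v). by exists (v :: r); rewrite cat_rcons.
Qed.

Lemma next_some (V : finType) (e : rel V) prec (tau : seq V) p v :
  tbls_next e prec tau p = Some v -> (v \in tau) && eligible e prec p v.
Proof.
rewrite /tbls_next; case E: [seq x <- tau | eligible e prec p x] => [|a l] //= [<-].
have : a \in [seq x <- tau | eligible e prec p x] by rewrite E mem_head.
by rewrite mem_filter andbC.
Qed.

Lemma key (V : finType) (e : rel V) prec (tau sigma : seq V) k :
  forall p, tbls_aux e prec tau k p = sigma -> tbls_aux e prec sigma k p = sigma.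
Proof.
elim: k => [|k IH] p //=.
case Hn: (tbls_next e prec tau p) => [v|] H.
- have Hs := IH _ H.
  have [r Hr] := @aux_prefix _ e prec tau k (rcons p v).
  move/andP: (@next_some _ _ _ _ _ _ Hn) => [_ Hel].
  suff -> : tbls_next e prec sigma p = Some v by [].
  rewrite /tbls_next -H Hr cat_rcons filter_cat.
  have -> : [seq x <- p | eligible e prec p x] = [::].
    apply/eqP; rewrite -[_ == _]negbK -has_filter; apply/hasPn => x xp.
    by rewrite /eligible xp.
  by rewrite /= Hel.
- subst sigma.
  case Hs: (tbls_next e prec p p) => [v|] //.
  move/andP: (@next_some _ _ _ _ _ _ Hs) => [vp /andP [nvp _]].
  by rewrite vp in nvp.
Qed.

Theorem theorem2 (V : finType) (e : rel V) (prec : rel {fset nat})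
    (sigma : seq V) :
  undirected_graph e -> strict_porder prec -> ordering sigma ->
  (exists tau : seq V, ordering tau /\ sigma = TBLS e prec tau) <->
  sigma = TBLS e prec sigma.
Proof.
move=> _ _ Ho; split.
- move=> [tau [_ H]]; rewrite /TBLS. by rewrite (@key _ _ _ _ _ _ _ (esym H)).
- by move=> H; exists sigma.
Qed.
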